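(* Let $M$ be a pointed metric space and let $\mathcal U$ be an ultrafilter. Then $\mathcal F(M_{\mathcal U})$ is finitely representable in $\mathcal F(M)$.
   Context: Ultrapower of a metric space: for an ultrafilter $\mathcal U$ on a set $I$ and a metric space $(M,d)$ with base point $0$, let $\ell_\infty(M)=\{(x_i)_{i\in I}\in M^I:\sup_i d(x_i,0)<\infty\}$ with pseudometric $d((x_i),(y_i))=\lim_{\mathcal U,i}d(x_i,y_i)$; $M_{\mathcal U}$ is the metric quotient identifying points at distance $0$, pointed by the class of the constant sequence $0$. For a pointed metric space $M$, $\mathrm{Lip}_0(M)$ is the Banach space of real Lipschitz functions vanishing at the base point normed by the Lipschitz constant, and the Lipschitz-free space is $\mathcal F(M)=\overline{\mathrm{span}}\{\delta(x):x\in M\}\subset\mathrm{Lip}_0(M)^*$, $\delta(x)$ being evaluation at $x$. A Banach space $X$ is finitely representable in a Banach space $Y$ if for every finite-dimensional subspace $E$ of $X$ and every $\varepsilon>0$ there is a finite-dimensional subspace $F$ of $Y$ with Banach–Mazur distance $d(E,F)\leq 1+\varepsilon$. *)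

(* Defs.v *)
From HB Require Import structures.
From mathcomp Require Import all_boot all_order all_algebra.
From mathcomp Require Import all_classical all_reals.
Set Implicit Arguments. Unset Strict Implicit. Unset Printing Implicit Defensive.
Import Order.TTheory GRing.Theory Num.Theory.
Local Open Scope classical_set_scope.
Local Open Scope ring_scope.

Section Metric.
Variables (R : realType) (M : Type).

Definition is_metric (d : M -> M -> R) : Prop :=
  [/\ forall x y, 0 <= d x y,
      forall x y, d x y = 0 <-> x = y,
      forall x y, d x y = d y x &
      forall x y z, d x z <= d x y + d y z].

Variables (d : M -> M -> R) (m0 : M).

Definition lip0 (f : M -> R) : Prop :=
  f m0 = 0 /\ exists L : R, forall x y, `|f x - f y| <= L * d x y.

Definition lip0_ball (f : M -> R) : Prop :=
  f m0 = 0 /\ forall x y, `|f x - f y| <= d x y.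

(** Elements of Lip_0(M)^* are encoded as functionals on all of M -> R that
    vanish outside Lip_0(M) (the canonical representative of a functional on
    Lip_0(M)), linear on Lip_0(M) and bounded. *)
Definition lip0_dual (phi : (M -> R) -> R^o) : Prop :=
  [/\ forall f, ~ lip0 f -> phi f = 0,
      forall (a : R) f g, lip0 f -> lip0 g ->
        phi (fun x => a * f x + g x) = a * phi f + phi g &
      exists C : R, forall f, lip0_ball f -> `|phi f| <= C].

Definition dual_norm (phi : (M -> R) -> R^o) : R :=
  sup [set `|phi f| | f in lip0_ball].

Definition delta (x : M) : (M -> R) -> R :=
  fun f => if `[< lip0 f >] then f x else 0.

Definition span_delta (phi : (M -> R) -> R^o) : Prop :=
  exists (n : nat) (c : 'I_n -> R) (x : 'I_n -> M),
    phi = fun f => \sum_(i < n) c i * delta (x i) f.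

Definition free_space : set ((M -> R) -> R^o) :=
  [set phi | lip0_dual phi /\
     forall e : R, 0 < e -> exists psi, span_delta psi /\
        dual_norm (fun f => phi f - psi f) < e].

End Metric.

Section Ultrapower.
Variables (R : realType) (M : Type) (d : M -> M -> R) (m0 : M).
Variables (I : Type) (U : set (set I)).

Definition is_ultrafilter : Prop :=
  [/\ U setT, ~ U set0,
      forall A B, U A -> A `<=` B -> U B,
      forall A B, U A -> U B -> U (A `&` B) &
      forall A, U A \/ U (~` A)].

Definition linf (x : I -> M) : Prop := exists B : R, forall i, d (x i) m0 <= B.

Definition ulim (a : I -> R) : R :=
  xget 0 [set l | forall e : R, 0 < e -> U [set i | `|a i - l| < e]].

Definition upseudo (x y : I -> M) : R := ulim (fun i => d (x i) (y i)).

Definition ultrapower : Type :=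
  { S : set (I -> M) | exists x, linf x /\ S = [set y | linf y /\ upseudo x y = 0] }.

Definition urep (c : ultrapower) : I -> M := projT1 (cid (proj2_sig c)).

Definition udist (a b : ultrapower) : R := upseudo (urep a) (urep b).

Lemma linf_cst : linf (fun _ => m0).
Proof. by exists (d m0 m0) => i; rewrite lexx. Qed.

Definition ubase : ultrapower :=
  exist _ [set y | linf y /\ upseudo (fun _ => m0) y = 0]
    (ex_intro _ (fun _ => m0) (conj linf_cst erefl)).

End Ultrapower.

Section FinRep.
Variable (R : realType).

Definition lspan (V : lmodType R) (n : nat) (e : 'I_n -> V) : set V :=
  [set v | exists c : 'I_n -> R, v = \sum_(i < n) c i *: e i].

Definition fd_subspace (V : lmodType R) (X E : set V) : Prop :=
  exists (n : nat) (e : 'I_n -> V), (forall i, X (e i)) /\ E = lspan e.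

(** Banach–Mazur distance d(E,F) <= c, i.e. inf ||T|| ||T^-1|| <= c over
    linear isomorphisms T : E -> F *)
Definition bm_dist_le (V W : lmodType R) (nV : V -> R) (nW : W -> R)
    (E : set V) (F : set W) (c : R) : Prop :=
  forall c' : R, c < c' -> exists T : V -> W,
    [/\ forall (a : R) x y, E x -> E y -> T (a *: x + y) = a *: T x + T y,
        forall x y, E x -> E y -> T x = T y -> x = y,
        T @` E = F &
        exists a b : R, [/\ 0 <= a, 0 <= b, a * b <= c',
          forall x, E x -> nW (T x) <= a * nV x &
          forall x, E x -> nV x <= b * nW (T x)]].

Definition fin_rep (V W : lmodType R) (X : set V) (nX : V -> R)
    (Y : set W) (nY : W -> R) : Prop :=
  forall E, fd_subspace X E -> forall eps : R, 0 < eps ->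
    exists F, fd_subspace Y F /\ bm_dist_le nX nY E F (1 + eps).

End FinRep.

(* Main.v *)
Require Import Defs.
From HB Require Import structures.
From mathcomp Require Import all_boot all_order all_algebra.
From mathcomp Require Import all_classical all_reals.
From mathcomp Require Import topology normedtype derive.
From mathcomp Require Import ring lra.
Import Order.TTheory GRing.Theory Num.Theory.
Import numFieldNormedType.Exports.
Local Open Scope classical_set_scope.
Local Open Scope ring_scope.
Set Implicit Arguments. Unset Strict Implicit. Unset Printing Implicit Defensive.


Section BigMin.
Variables (R : realType) (J : finType).

Lemma min_lip (a b c e t : R) : `|a - c| <= t -> `|b - e| <= t ->
  `|Num.min a b - Num.min c e| <= t.
Proof.
rewrite !ler_norml => /andP[h1 h2] /andP[h3 h4].
rewrite !minEle; case: ifP => h5; case: ifP => h6; apply/andP; split; lra.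
Qed.

Lemma bigmin_le (F : J -> R) (idx : R) j0 : \big[Num.min/idx]_j F j <= F j0.
Proof. by rewrite (bigD1 j0) //= ge_min lexx. Qed.

Lemma bigmin_le_idx (F : J -> R) (idx : R) : \big[Num.min/idx]_j F j <= idx.
Proof.
by elim/big_rec: _ => // i x _ hx; rewrite ge_min hx orbT.
Qed.

Lemma bigmin_ge (F : J -> R) (idx a : R) : (forall j, a <= F j) -> a <= idx ->
  a <= \big[Num.min/idx]_j F j.
Proof.
move=> hF hi; apply: (big_ind (fun u => a <= u)) => //.
by move=> u v hu hv; rewrite le_min hu hv.
Qed.

Lemma bigmin_lip (F G : J -> R) (i1 i2 t : R) : (forall j, `|F j - G j| <= t) ->
  `|i1 - i2| <= t ->
  `|\big[Num.min/i1]_j F j - \big[Num.min/i2]_j G j| <= t.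
Proof.
move=> hF hi; apply: (big_ind2 (fun u v => `|u - v| <= t)) => //.
by move=> *; apply: min_lip.
Qed.
End BigMin.

Section Norms.
Variables (R : realType) (M : Type) (d : M -> M -> R) (m0 : M).
Hypothesis hd : is_metric d.

Definition bnd (phi : (M -> R) -> R^o) :=
  exists C : R, forall f, lip0_ball d m0 f -> `|phi f| <= C.

Lemma ball0 : lip0_ball d m0 (fun _ => 0).
Proof. by case: hd => h0 _ _ _; split => // x y; rewrite subrr normr0. Qed.

Lemma ball_lip0 f : lip0_ball d m0 f -> lip0 d m0 f.
Proof. by case=> h1 h2; split => //; exists 1 => x y; rewrite mul1r. Qed.

Lemma norm_hassup phi : bnd phi -> has_sup [set `|phi f| | f in lip0_ball d m0].
Proof.
case=> C hC; split; first by exists `|phi (fun _ => 0)|, (fun _ => 0); last by []; exact: ball0.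
by exists C => _ [f hf <-]; exact: hC.
Qed.

Lemma N_ge phi f : bnd phi -> lip0_ball d m0 f -> `|phi f| <= dual_norm d m0 phi.
Proof.
move=> hb hf; apply: sup_upper_bound; first exact: norm_hassup.
by exists f.
Qed.

Lemma N_le phi C : (forall f, lip0_ball d m0 f -> `|phi f| <= C) ->
  dual_norm d m0 phi <= C.
Proof.
move=> h; apply: ge_sup; first by exists `|phi (fun _ => 0)|, (fun _ => 0); last by []; exact: ball0.
by move=> _ [f hf <-]; exact: h.
Qed.

Lemma N_ge0 phi : bnd phi -> 0 <= dual_norm d m0 phi.
Proof. move=> hb; apply: le_trans (N_ge hb ball0); exact: normr_ge0. Qed.

Lemma ball_bound f x : lip0_ball d m0 f -> `|f x| <= d x m0.
Proof. by case=> h1 h2; have := h2 x m0; rewrite h1 subr0. Qed.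

Lemma delta_ball x f : lip0_ball d m0 f -> delta d m0 x f = f x.
Proof. by move=> /ball_lip0 hf; rewrite /delta asboolT. Qed.

Lemma bnd_fin (J : finType) (c : J -> R) (p : J -> M) :
  bnd (fun f => \sum_j c j * delta d m0 (p j) f).
Proof.
exists (\sum_j `|c j| * d (p j) m0) => f hf.
apply: le_trans (ler_norm_sum _ _ _) _; apply: ler_sum => j _.
rewrite normrM delta_ball //; apply: ler_wpM2l => //; exact: ball_bound.
Qed.

End Norms.

Section Transfer.
Variables (R : realType) (X Y : Type) (dX : X -> X -> R) (dY : Y -> Y -> R)
  (x0 : X) (y0 : Y).
Hypotheses (hX : is_metric dX) (hY : is_metric dY).

Lemma transfer (J : finType) (P : option J -> X) (G : X -> Y) (c : J -> R) (K : R) :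
  P None = x0 -> G x0 = y0 -> 0 < K ->
  (forall a b, dY (G (P a)) (G (P b)) <= K * dX (P a) (P b)) ->
  dual_norm dY y0 (fun f => \sum_j c j * delta dY y0 (G (P (Some j))) f) <=
  K * dual_norm dX x0 (fun f => \sum_j c j * delta dX x0 (P (Some j)) f).
Proof.
move=> hP hG K0 hK.
case: (hX) => dX0 dXe dXs dXt.
case: (hY) => dY0 dYe dYs dYt.
have dXxx x : dX x x = 0 by apply/dXe.
apply: (N_le hY) => f hf.
have f0 : f y0 = 0 by case: hf.
have fl u v : f u - f v <= dY u v.
  by case: hf => _ h; apply: le_trans (h u v); exact: ler_norm.
pose h x := \big[Num.min/dX x x0]_(o : option J) (f (G (P o)) / K + dX x (P o)).
have key o o' : f (G (P o)) / K <= f (G (P o')) / K + dX (P o) (P o').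
  rewrite -lerBlDl -mulrBl ler_pdivrMr // mulrC.
  by apply: le_trans (hK o o'); exact: fl.
have hPo o : h (P o) = f (G (P o)) / K.
  apply/eqP; rewrite eq_le; apply/andP; split.
    by apply: le_trans (bigmin_le _ _ o) _; rewrite dXxx addr0.
  apply: bigmin_ge => [o'|]; first exact: key.
  by have := key o None; rewrite hP hG f0 mul0r add0r.
have hball : lip0_ball dX x0 h.
  split; first by rewrite -hP hPo hP hG f0 mul0r.
  move=> x y; apply: bigmin_lip => [o|].
    have -> : forall a b b2 : R, a + b - (a + b2) = b - b2 by move=> a b b2; ring.
    rewrite ler_norml; apply/andP; split.
      by have := dXt y x (P o); rewrite (dXs y x); lra.
    by have := dXt x y (P o); lra.
  rewrite ler_norml; apply/andP; split.
    by have := dXt y x x0; rewrite (dXs y x); lra.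
  by have := dXt x y x0; lra.
have := N_ge hX (bnd_fin dX x0 c (fun j => P (Some j))) hball.
rewrite (eq_bigr (fun j => c j * f (G (P (Some j))) / K)); last first.
  by move=> j _; rewrite delta_ball // hPo mulrA.
rewrite -mulr_suml normrM (gtr0_norm (_ : 0 < K^-1)) ?invr_gt0 //.
rewrite ler_pdivrMr // mulrC => H.
rewrite (eq_bigr (fun j => c j * f (G (P (Some j))))) //.
by move=> j _; rewrite delta_ball.
Qed.
End Transfer.

Section Ultra.
Variables (R : realType) (I : Type) (U : set (set I)).
Hypothesis hU : is_ultrafilter U.

Lemma U_mono A B : U A -> A `<=` B -> U B.
Proof. by case: hU => _ _ h _ _; exact: h. Qed.

Lemma U_and A B : U A -> U B -> U (A `&` B).
Proof. by case: hU => _ _ _ h _; exact: h. Qed.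

Lemma U_T : U setT. Proof. by case: hU. Qed.

Lemma U_ne A : U A -> exists i, A i.
Proof.
move=> UA; apply: contrapT => hn; case: hU => _ h0 _ _ _; apply: h0.
suff -> : set0 = A by []. 
by apply/seteqP; split => // i Ai; exfalso; apply: hn; exists i.
Qed.

Lemma U_or A : U A \/ U (~` A). Proof. by case: hU => _ _ _ _ h; exact: h. Qed.

Lemma U_fin (J : finType) (S : J -> set I) : (forall j, U (S j)) ->
  U [set i | forall j, S j i].
Proof.
move=> hS.
suff : forall s : seq J, U [set i | forall j, j \in s -> S j i].
  move=> /(_ (enum J)) h; apply: U_mono h _ => i h j; apply: h; by rewrite mem_enum.
elim=> [|j s IH]; first by apply: U_mono U_T _.
apply: U_mono (U_and (hS j) IH) _ => i [h1 h2] k; rewrite inE => /orP[/eqP->//|].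
exact: h2.
Qed.

Definition ulimR := @ulim R I U.

Lemma ulim_uniq_aux (a : I -> R) l l' :
  (forall e : R, 0 < e -> U [set i | `|a i - l| < e]) ->
  (forall e : R, 0 < e -> U [set i | `|a i - l'| < e]) -> l = l'.
Proof.
move=> h1 h2; apply/eqP; rewrite -subr_eq0 -normr_le0.
apply/ler_addgt0Pr => e e0; rewrite add0r.
have e20 : 0 < e / 2 by rewrite divr_gt0.
have [i [hi1 hi2]] := U_ne (U_and (h1 _ e20) (h2 _ e20)).
move: hi1 hi2 => /= hi1 hi2.
have := ler_distD (a i) l l'.
rewrite (distrC l (a i)); lra.
Qed.

Lemma ulim_ex (a : I -> R) : (exists B, forall i, `|a i| <= B) ->
  forall e : R, 0 < e -> U [set i | `|a i - ulim U a| < e].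
Proof.
move=> [B hB].
suff [l hl] : exists l, forall e : R, 0 < e -> U [set i | `|a i - l| < e].
  rewrite /ulim; case: xgetP => [l' -> Pl' //| nP]; exfalso; exact: (nP l hl).
pose S := [set t : R | U [set i | t <= a i]].
have SB : S (- B).
  apply: U_mono U_T _ => i _ /=; have := hB i; rewrite ler_norml => /andP[]//.
have Sub : ubound S (B + 1).
  move=> t St; rewrite leNgt; apply/negP => hlt.
  have [i hi] := U_ne St; have := hB i; rewrite ler_norml => /andP[_ h].
  move: hi => /=; lra.
have hs : has_sup S by split; [exists (- B) | exists (B + 1)].
exists (sup S) => e e0.
have e20 : 0 < e / 2 by rewrite divr_gt0.
have [t St ht] := sup_adherent e20 hs.
have nS : ~ S (sup S + e / 2).
  move=> /(sup_upper_bound hs); lra.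
have Uc : U (~` [set i | sup S + e / 2 <= a i]).
  by case: (U_or [set i | sup S + e / 2 <= a i]).
apply: U_mono (U_and St Uc) _ => i [/= h1 /negP]; rewrite -ltNge => h2.
rewrite ltr_norml; apply/andP; split; lra.
Qed.

Lemma ulim_uniq (a : I -> R) l : (exists B, forall i, `|a i| <= B) ->
  (forall e : R, 0 < e -> U [set i | `|a i - l| < e]) -> ulim U a = l.
Proof. move=> hB h; apply: (ulim_uniq_aux (ulim_ex hB)) h. Qed.

Lemma ulim_cst (c : R) : ulim U (fun _ => c) = c.
Proof.
apply: ulim_uniq; first by exists `|c|.
by move=> e e0; apply: U_mono U_T _ => i _ /=; rewrite subrr normr0.
Qed.

Lemma ulim_add (a b : I -> R) : (exists B, forall i, `|a i| <= B) ->
  (exists B, forall i, `|b i| <= B) ->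
  ulim U (fun i => a i + b i) = ulim U a + ulim U b.
Proof.
move=> [A hA] [B hB]; apply: ulim_uniq.
  by exists (A + B) => i; apply: le_trans (ler_normD _ _) _; apply: lerD.
move=> e e0; have e20 : 0 < e / 2 by rewrite divr_gt0.
have h1 := ulim_ex (ex_intro _ A hA) e20.
have h2 := ulim_ex (ex_intro _ B hB) e20.
apply: U_mono (U_and h1 h2) _ => i [/= u v].
have -> : a i + b i - (ulim U a + ulim U b) = (a i - ulim U a) + (b i - ulim U b) by ring.
apply: le_lt_trans (ler_normD _ _) _; lra.
Qed.

Lemma ulim_le (a b : I -> R) : (exists B, forall i, `|a i| <= B) ->
  (exists B, forall i, `|b i| <= B) -> (forall i, a i <= b i) ->
  ulim U a <= ulim U b.
Proof.
move=> hA hB hab; rewrite leNgt; apply/negP => hlt.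
pose e := (ulim U a - ulim U b) / 2.
have e0 : 0 < e by rewrite divr_gt0 // subr_gt0.
have [i [/= u v]] := U_ne (U_and (ulim_ex hA e0) (ulim_ex hB e0)).
move: u v; rewrite !ltr_norml => /andP[u1 u2] /andP[v1 v2].
have := hab i; rewrite /e in u1 u2 v1 v2; lra.
Qed.

End Ultra.

Section UltraMetric.
Variables (R : realType) (M : Type) (d : M -> M -> R) (m0 : M).
Hypothesis hd : is_metric d.
Variables (I : Type) (U : set (set I)).
Hypothesis hU : is_ultrafilter U.

Local Notation UP := (@ultrapower R M d m0 I U).
Local Notation ud := (@udist R M d m0 I U).
Local Notation ub := (@ubase R M d m0 I U).
Local Notation up := (@upseudo R M d I U).
Implicit Types (x y z : I -> M).

Lemma d0 (x y : M) : 0 <= d x y. Proof. by case: hd. Qed.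
Lemma dsym (x y : M) : d x y = d y x. Proof. by case: hd. Qed.
Lemma dtri (x y z : M) : d x z <= d x y + d y z. Proof. by case: hd. Qed.
Lemma dxx (x : M) : d x x = 0. Proof. by case: hd => _ h _ _; apply/h. Qed.

Lemma linf_bnd x y : linf d m0 x -> linf d m0 y ->
  exists B, forall i, `|d (x i) (y i)| <= B.
Proof.
move=> [A hA] [B hB]; exists (A + B) => i; rewrite ger0_norm ?d0 //.
apply: le_trans (dtri _ m0 _) _; apply: lerD => //; rewrite dsym; exact: hB.
Qed.

Lemma urep_spec (a : UP) : linf d m0 (urep a) /\
  proj1_sig a = [set y | linf d m0 y /\ up (urep a) y = 0].
Proof. exact: (projT2 (cid (proj2_sig a))). Qed.

Lemma up_refl x : up x x = 0.
Proof.
rewrite /upseudo (_ : (fun i => d (x i) (x i)) = fun _ => 0) ?ulim_cst //.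
by apply/funext => i; rewrite dxx.
Qed.

Lemma up_sym x y : up x y = up y x.
Proof. by rewrite /upseudo; congr ulim; apply/funext => i; rewrite dsym. Qed.

Lemma up_tri x y z : linf d m0 x -> linf d m0 y -> linf d m0 z ->
  up x z <= up x y + up y z.
Proof.
move=> hx hy hz; rewrite /upseudo -ulim_add //; try exact: linf_bnd.
apply: ulim_le => //; try exact: linf_bnd.
  have [A hA] := linf_bnd hx hy; have [B hB] := linf_bnd hy hz.
  by exists (A + B) => i; apply: le_trans (ler_normD _ _) _; apply: lerD.
by move=> i; exact: dtri.
Qed.

Lemma up_ge0 x y : linf d m0 x -> linf d m0 y -> 0 <= up x y.
Proof.
move=> hx hy; rewrite -(ulim_cst hU 0); apply: ulim_le => //; last by move=> i; exact: d0.
  by exists 0 => i; rewrite normr0.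
exact: linf_bnd.
Qed.

Lemma udist_metric : is_metric ud.
Proof.
split.
- by move=> a b; apply: up_ge0; [case: (urep_spec a)|case: (urep_spec b)].
- move=> a b; split; last by move=> ->; apply: up_refl.
  move=> h; have [la ea] := urep_spec a; have [lb eb] := urep_spec b.
  have : proj1_sig a = proj1_sig b.
    rewrite ea eb; apply/seteqP; split => z [lz hz]; split => //.
      apply/eqP; rewrite eq_le; apply/andP; split; last by apply: up_ge0.
      rewrite -hz; apply: le_trans (up_tri lb la lz) _.
      by rewrite up_sym /udist in h *; rewrite h add0r.
    apply/eqP; rewrite eq_le; apply/andP; split; last by apply: up_ge0.
    rewrite -hz; apply: le_trans (up_tri la lb lz) _.
    by rewrite /udist in h; rewrite h add0r.
  clear la lb ea eb h; case: a => Sa pa; case: b => Sb pb /= E; subst Sb.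
  by congr exist; apply: Prop_irrelevance.
- by move=> a b; apply: up_sym.
- move=> a b c; apply: up_tri; [case: (urep_spec a)|case: (urep_spec b)|case: (urep_spec c)] => //.
Qed.

Lemma ubase_rep : up (fun _ => m0) (urep ub) = 0.
Proof.
have [l e] := urep_spec ub.
have : proj1_sig ub (urep ub) by rewrite e; split => //; exact: up_refl.
by case.
Qed.

Definition gi (i : I) (a : UP) : M := if `[< a = ub >] then m0 else urep a i.

Lemma gi_conv (a b : UP) (e : R) : 0 < e -> U [set i | `|d (gi i a) (gi i b) - ud a b| < e].
Proof.
move=> e0.
have key : forall c : UP, forall e : R, 0 < e ->
    U [set i | `|d m0 (urep c i) - ud ub c| < e].
  move=> c e' e'0; have e20 : 0 < e' / 2 by rewrite divr_gt0.
  have lb := (urep_spec ub).1; have lc := (urep_spec c).1.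
  have h1 := ulim_ex hU (linf_bnd lb lc) e20.
  have h2 := ulim_ex hU (linf_bnd (@linf_cst R M d m0 I) lb) e20.
  have hr := ubase_rep; rewrite /upseudo in hr; rewrite hr in h2.
  have HH := U_and hU h1 h2. have HHH := U_mono hU HH.
  apply: HHH => i [/= u v].
  rewrite subr0 ger0_norm ?d0 // in v.
  have t1 := dtri m0 (urep ub i) (urep c i).
  have t2 := dtri (urep ub i) m0 (urep c i).
  rewrite (dsym (urep ub i) m0) in t2.
  rewrite /udist /upseudo; move: u; rewrite !ltr_norml => /andP[u1 u2]; apply/andP; split; lra.
rewrite /gi; case: (pselect (a = ub)) => ha; case: (pselect (b = ub)) => hb.
- rewrite (asboolT ha) (asboolT hb) ha hb dxx.
  have -> : ud ub ub = 0 by case: udist_metric => _ h _ _; apply/h.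
  by have HH := U_mono hU (U_T hU); apply: HH => i _ /=; rewrite subrr normr0.
- rewrite (asboolT ha) (asboolF hb) ha.
  by apply: key.
- rewrite (asboolF ha) (asboolT hb) hb.
  have -> : ud a ub = ud ub a by case: udist_metric.
  have HH := U_mono hU (key a e e0); apply: HH => i /=; by rewrite dsym.
- rewrite (asboolF ha) (asboolF hb).
  exact: (ulim_ex hU (linf_bnd (urep_spec a).1 (urep_spec b).1) e0).
Qed.

Lemma good_index (J : finType) (P : J -> UP) (eta : R) : 0 < eta ->
  exists i, forall a b : J,
    d (gi i (P a)) (gi i (P b)) <= (1 + eta) * ud (P a) (P b) /\ ud (P a) (P b) <= (1 + eta) * d (gi i (P a)) (gi i (P b)).
Proof.
move=> eta0.
have [m0' mE ms mt] := udist_metric.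
have H : forall ab : J * J, U [set i | 
    d (gi i (P ab.1)) (gi i (P ab.2)) <= (1 + eta) * ud (P ab.1) (P ab.2) /\ ud (P ab.1) (P ab.2) <= (1 + eta) * d (gi i (P ab.1)) (gi i (P ab.2))].
  move=> [a b] /=.
  case: (pselect (P a = P b)) => hab.
    have HH := U_mono hU (U_T hU); apply: HH => i _ /=.
    have hz : ud (P b) (P b) = 0 by apply/(mE _ _).
    by rewrite hab dxx hz mulr0; split.
  have u0 : 0 < ud (P a) (P b).
    rewrite lt_def m0' andbT; apply/eqP => /mE; exact: hab.
  set u := ud (P a) (P b) in u0 *.
  pose e := eta * u / (1 + eta).
  have e0 : 0 < e by rewrite divr_gt0 ?mulr_gt0 //; lra.
  have ee : e * (1 + eta) = eta * u by rewrite /e divfK //; apply/eqP => h; lra.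
  have HH := U_mono hU (gi_conv (P a) (P b) e0); apply: HH => i /=.
  rewrite -/u ltr_norml => /andP[h1 h2].
  split; nra.
have [i hi] := U_ne hU (U_fin hU H).
by exists i => a b; exact: (hi (a, b)).
Qed.

End UltraMetric.

Section Findim.
Variable (R : realType).

Lemma findim_lower (n : nat) (F : 'rV[R]_n -> R) (L : R) :
  (forall v w, `|F v - F w| <= L * `|v - w|) ->
  (forall t v, F (t *: v) = `|t| * F v) -> (forall v, 0 <= F v) ->
  (forall v, F v = 0 -> v = 0) ->
  exists K, 0 < K /\ forall v, `|v| <= K * F v.
Proof.
move=> FL FZ F0 Fdef.
pose S := [set v : 'rV[R]_n | `|v| = 1].
have unit v : v != 0 -> S (`|v|^-1 *: v).
  move=> vn0; rewrite /S /= normrZ normrV ?unitfE ?normr_eq0 // normr_id.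
  by rewrite mulVf // normr_eq0.
have homog v : v != 0 -> F v = `|v| * F (`|v|^-1 *: v).
  move=> vn0; rewrite FZ normrV ?unitfE ?normr_eq0 // normr_id mulrA.
  by rewrite mulfV ?mul1r // normr_eq0.
case: (pselect (S !=set0)) => [S0|Sn0]; last first.
  exists 1; split => // v; case: (eqVneq v 0) => [->|vn0].
    by rewrite normr0 mul1r.
  by exfalso; apply: Sn0; exists (`|v|^-1 *: v); exact: unit.
have cS : compact S.
  apply: bounded_closed_compact.
    rewrite /= /bounded_near; near=> M => v /= ->; near: M.
    by apply: nbhs_pinfty_ge; rewrite num_real.
  apply: (@preimage_closed _ _ (fun v : 'rV[R]_n => `|v|) [set x | x = 1]).
    by move=> x _; apply: norm_continuous.
  exact: closed_eq.
have cF : continuous F.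
  move=> x; have FF : ProperFilter (nbhs x) by apply: nbhs_pfilter.
  apply/cvgrPdist_lt => e e0.
  have H : \forall y \near x, `|x - y| < e / (`|L| + 1).
    apply: (@cvgr_dist_lt _ _ _ _ FF (fun y => y) x (@cvg_id _ _)).
    by rewrite divr_gt0 // ltr_pwDr.
  move: H; apply: filterS => y hy.
  apply: (le_lt_trans (FL _ _)).
  apply: (le_lt_trans (ler_wpM2r (normr_ge0 _) (ler_norm L))).
  rewrite -(@ltr_pM2r _ (`|L| + 1)^-1) ?invr_gt0 ?ltr_pwDr //.
  apply: le_lt_trans hy.
  rewrite ler_pdivrMr ?ltr_pwDr //; have := normr_ge0 (x - y); have := normr_ge0 L; nra.
have cFS : {within S, continuous F} by apply: continuous_subspaceT.
have [c Sc Fc] := EVT_min_rV S0 cS cFS.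
have c1 : `|c| = 1 by move: Sc; rewrite inE.
have Fcpos : 0 < F c.
  rewrite lt_def F0 andbT; apply/eqP => /Fdef c0.
  by move: c1; rewrite c0 normr0 => /eqP; rewrite eq_sym oner_eq0.
exists (F c)^-1; split; first by rewrite invr_gt0.
move=> v; case: (eqVneq v 0) => [->|vn0]; first by rewrite normr0 mulr_ge0 ?F0 // invr_ge0 F0.
rewrite (homog v vn0) mulrCA; apply: ler_peMr => //.
rewrite mulrC ler_pdivlMr // mul1r.
by apply: Fc; rewrite inE; exact: unit.
Unshelve. all: by end_near.
Qed.

End Findim.

Section NormAlg.
Variables (R : realType) (M : Type) (d : M -> M -> R) (m0 : M).
Hypothesis hd : is_metric d.
Local Notation V := ((M -> R) -> R^o).
Local Notation N := (dual_norm d m0).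
Local Notation bnd := (bnd d m0).
Implicit Types (x y : V).

Lemma sumE (J : finType) (c : J -> R) (x : J -> V) f :
  (\sum_j c j *: x j) f = \sum_j c j * x j f.
Proof. by rewrite fct_sumE. Qed.

Lemma bnd_sum (J : finType) (c : J -> R) (x : J -> V) :
  (forall j, bnd (x j)) -> bnd (\sum_j c j *: x j).
Proof.
move=> hx; have hC j := cid (hx j).
exists (\sum_j `|c j| * projT1 (hC j)) => f hf; rewrite sumE.
apply: le_trans (ler_norm_sum _ _ _) _; apply: ler_sum => j _.
by rewrite normrM; apply: ler_wpM2l => //; exact: (projT2 (hC j)).
Qed.

Lemma N_sum (J : finType) (c : J -> R) (x : J -> V) :
  (forall j, bnd (x j)) -> N (\sum_j c j *: x j) <= \sum_j `|c j| * N (x j).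
Proof.
move=> hx; apply: (N_le hd) => f hf; rewrite sumE.
apply: le_trans (ler_norm_sum _ _ _) _; apply: ler_sum => j _.
by rewrite normrM; apply: ler_wpM2l => //; exact: N_ge.
Qed.

Lemma bndD x y : bnd x -> bnd y -> bnd (x + y).
Proof.
move=> [A hA] [B hB]; exists (A + B) => f hf.
by apply: le_trans (ler_normD _ _) _; apply: lerD; [exact: hA|exact: hB].
Qed.

Lemma bndZ t x : bnd x -> bnd (t *: x).
Proof.
move=> [A hA]; exists (`|t| * A) => f hf; rewrite /= normrM.
by apply: ler_wpM2l => //; exact: hA.
Qed.

Lemma N_tri x y : bnd x -> bnd y -> N (x + y) <= N x + N y.
Proof.
move=> hx hy; apply: (N_le hd) => f hf.
by apply: le_trans (ler_normD _ _) _; apply: lerD; apply: N_ge.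
Qed.

Lemma N_Zle t x : bnd x -> N (t *: x) <= `|t| * N x.
Proof.
move=> hx; apply: (N_le hd) => f hf; rewrite /= normrM.
by apply: ler_wpM2l => //; apply: N_ge.
Qed.

Lemma N_Z t x : bnd x -> N (t *: x) = `|t| * N x.
Proof.
move=> hx; apply/eqP; rewrite eq_le N_Zle //=.
case: (eqVneq t 0) => [->|t0].
  by rewrite normr0 mul0r; apply: N_ge0 => //; exact: bndZ.
have : N x <= `|t^-1| * N (t *: x).
  by rewrite -{1}(scale1r x) -(mulVf t0) -scalerA; apply: N_Zle; exact: bndZ.
by rewrite normrV ?unitfE // -ler_pdivrMl ?invr_gt0 ?normr_gt0 // invrK.
Qed.

Lemma N_sub x y : bnd x -> bnd y -> N x - N y <= N (x - y).
Proof.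
move=> hx hy; rewrite lerBlDr.
have hxy : bnd (x - y) by apply: bndD => //; rewrite -scaleN1r; exact: bndZ.
by have := N_tri hxy hy; rewrite subrK.
Qed.

Lemma lip0_dual_bnd x : lip0_dual d m0 x -> bnd x.
Proof. by case. Qed.

Lemma lip0_dual_sum (J : finType) (c : J -> R) (x : J -> V) :
  (forall j, lip0_dual d m0 (x j)) -> lip0_dual d m0 (\sum_j c j *: x j).
Proof.
move=> hx; split.
- move=> f nf; rewrite sumE big1 // => j _.
  by case: (hx j) => h _ _; rewrite h // mulr0.
- move=> a f g hf hg; rewrite !sumE mulr_sumr -big_split /=.
  apply: eq_bigr => j _; case: (hx j) => _ h _; rewrite h //; ring.
- by have := bnd_sum c (fun j => lip0_dual_bnd (hx j)); rewrite /bnd.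
Qed.

Lemma N_def x : lip0_dual d m0 x -> N x = 0 -> x = 0.
Proof.
move=> hx N0; case: (hx) => hz hlin _.
have hb := lip0_dual_bnd hx.
have x0 : x (fun _ => 0) = 0.
  have := hlin (-1) (fun _ => 0) (fun _ => 0).
  have l0 : lip0 d m0 (fun _ : M => (0:R)) by split => //; exists 0 => a b; rewrite subrr normr0 mul0r.
  move=> /(_ l0 l0); rewrite (_ : (fun _ => -1 * 0 + 0) = fun _ => 0); last first.
    by apply/funext => z; rewrite mulr0 addr0.
  by move=> ->; rewrite mulN1r addNr.
apply/funext => f /=.
case: (pselect (lip0 d m0 f)) => hf; last by rewrite hz.
case: (hf) => f0 [L hL].
pose L' := `|L| + 1.
have L'0 : 0 < L' by rewrite /L' ltr_pwDr.
pose g := fun z => L'^-1 * f z + 0.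
have hg : lip0_ball d m0 g.
  split; first by rewrite /g f0 mulr0 addr0.
  move=> a b; rewrite /g !addr0 -mulrBr normrM gtr0_norm ?invr_gt0 //.
  rewrite ler_pdivrMl //; apply: le_trans (hL a b) _.
  apply: ler_wpM2r; first by case: hd.
  by rewrite /L' (le_trans (ler_norm L)) // lerDl.
have := N_ge hd hb hg; rewrite N0 normr_le0 /g hlin //; last first.
  by split => //; exists 0 => a b; rewrite subrr normr0 mul0r.
rewrite x0 addr0 mulf_eq0 invr_eq0 => /orP[/eqP|/eqP] //.
by move=> h; move: L'0; rewrite h ltxx.
Qed.

Lemma N_diff x y : bnd x -> bnd y -> `|N x - N y| <= N (x - y).
Proof.
move=> hx hy; rewrite ler_norml; apply/andP; split; last exact: N_sub.
rewrite lerNl opprB; apply: le_trans (N_sub hy hx) _.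
have hxy : bnd (x - y) by apply: bndD => //; rewrite -scaleN1r; exact: bndZ.
by rewrite -opprB -scaleN1r N_Z // normrN1 mul1r.
Qed.

Lemma lip0_comb (a : R) f g : lip0 d m0 f -> lip0 d m0 g ->
  lip0 d m0 (fun z => a * f z + g z).
Proof.
move=> [f0 [Lf hf]] [g0 [Lg hg]]; split; first by rewrite f0 g0 mulr0 addr0.
exists (`|a| * Lf + Lg) => x y.
have -> : a * f x + g x - (a * f y + g y) = a * (f x - f y) + (g x - g y) by ring.
apply: le_trans (ler_normD _ _) _; rewrite normrM mulrDl -mulrA.
by apply: lerD => //; apply: ler_wpM2l.
Qed.

Lemma span_delta_free x : span_delta d m0 x -> free_space d m0 x.
Proof.
move=> [n [c [p ->]]]; split; last first.
  move=> e e0; exists (fun f => \sum_(i < n) c i * delta d m0 (p i) f); split.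
    by exists n, c, p.
  apply: (le_lt_trans _ e0); apply: (N_le hd) => f _; by rewrite subrr normr0.
split.
- move=> f nf; apply: big1 => i _; rewrite /delta asboolF // mulr0 //.
- move=> a f g hf hg; rewrite mulr_sumr -big_split /=; apply: eq_bigr => i _.
  rewrite /delta !asboolT //; first ring.
  exact: lip0_comb.
- exact: bnd_fin.
Qed.

End NormAlg.

Lemma coef_le_norm (R : realType) n (u : 'rV[R]_n) k : `|u ord0 k| <= `|u|.
Proof.
rewrite [leRHS]/Num.norm /= mx_normrE; apply/bigmax_geP; right => /=.
by exists (ord0, k).
Qed.

Section Lower.
Variables (R : realType) (M : Type) (d : M -> M -> R) (m0 : M).
Hypothesis hd : is_metric d.
Local Notation V := ((M -> R) -> R^o).
Local Notation N := (dual_norm d m0).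

Lemma basis_lower (m : nat) (b : 'I_m -> V) :
  (forall k, lip0_dual d m0 (b k)) ->
  (forall a : 'I_m -> R, \sum_k a k *: b k = 0 -> forall k, a k = 0) ->
  exists K0, 0 < K0 /\ forall a : 'I_m -> R, \sum_k `|a k| <= K0 * N (\sum_k a k *: b k).
Proof.
move=> hb hind.
have hbb k := lip0_dual_bnd (hb k).
pose F (v : 'rV[R]_m) := N (\sum_k v ord0 k *: b k).
have bF (v : 'rV[R]_m) : bnd d m0 (\sum_k v ord0 k *: b k) by apply: bnd_sum.
have hdiff (v w : 'rV[R]_m) : \sum_k v ord0 k *: b k - \sum_k w ord0 k *: b k =
    \sum_k (v - w) ord0 k *: b k.
  by rewrite -sumrB; apply: eq_bigr => k _; rewrite !mxE scalerBl.
have FL : forall v w, `|F v - F w| <= (\sum_k N (b k)) * `|v - w|.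
  move=> v w.
  have h1 : `|F v - F w| <= N (\sum_k (v - w) ord0 k *: b k).
    rewrite ler_norml; apply/andP; split.
      rewrite lerNl opprB; apply: le_trans (N_sub hd (bF w) (bF v)) _.
      have -> : \sum_k w ord0 k *: b k - \sum_k v ord0 k *: b k =
         - (\sum_k (v - w) ord0 k *: b k) by rewrite -hdiff opprB.
      by rewrite -scaleN1r N_Z // ?normrN1 ?mul1r //; exact: bF.
    by rewrite -hdiff; apply: N_sub.
  apply: le_trans h1 _; apply: le_trans (N_sum hd _ hbb) _.
  rewrite mulr_suml; apply: ler_sum => k _; rewrite mulrC.
  apply: ler_wpM2l; first by apply: N_ge0.
  exact: coef_le_norm.
have FZ : forall t v, F (t *: v) = `|t| * F v.
  move=> t v; rewrite /F -N_Z //; congr N.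
  by rewrite scaler_sumr; apply: eq_bigr => k _; rewrite mxE scalerA.
have F0 : forall v, 0 <= F v by move=> v; apply: N_ge0.
have Fdef : forall v, F v = 0 -> v = 0.
  move=> v /(N_def hd (lip0_dual_sum _ hb)) h.
  by apply/rowP => k; rewrite mxE; apply: hind h k.
have [K [K0 HK]] := findim_lower FL FZ F0 Fdef.
exists (m%:R * K + 1); split.
  by apply: ltr_wpDl => //; apply: mulr_ge0 => //; exact: ltW.
move=> a; pose v := \row_k a k.
have -> : \sum_k a k *: b k = \sum_k v ord0 k *: b k.
  by apply: eq_bigr => k _; rewrite mxE.
apply: (@le_trans _ _ (m%:R * `|v|)).
  have -> : (m%:R : R) = \sum_(k < m) (1:R) by rewrite sumr_const card_ord.
  rewrite mulr_suml.
  apply: ler_sum => k _; rewrite mul1r; have -> : a k = v ord0 k by rewrite mxE.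
  exact: coef_le_norm.
rewrite mulrDl mul1r -mulrA; apply: ler_wpDr; first exact: F0.
by apply: ler_wpM2l => //; exact: HK.
Qed.
End Lower.

Section Basis.
Variables (R : realType) (V : lmodType R) (X : set V).

Definition indep n (b : 'I_n -> V) :=
  forall a : 'I_n -> R, \sum_k a k *: b k = 0 -> forall k, a k = 0.

Lemma basis_extract n (e : 'I_n -> V) : (forall i, X (e i)) ->
  exists m (b : 'I_m -> V), [/\ forall k, X (b k), lspan e = lspan b & indep b].
Proof.
elim: n e => [|n IH] e he.
  by exists 0%N, e; split => // a _ [].
case: (pselect (indep e)) => hind; first by exists n.+1, e.
have [a [ha [j hj]]] : exists a : 'I_n.+1 -> R, \sum_k a k *: e k = 0 /\ exists j, a j != 0.
  apply: contrapT => hn; apply: hind => a ha k; apply/eqP; apply: contrapT => hk.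
  by apply: hn; exists a; split => //; exists k; apply/negP.
pose e' := fun i => e (lift j i).
have [m [b [hb he' hib]]] := IH e' (fun i => he _).
exists m, b; split => //; rewrite -he'.
have ej : e j = \sum_i (- (a (lift j i) / a j)) *: e' i.
  move: ha; rewrite (bigD1_ord j) //= => /eqP; rewrite addr_eq0 => /eqP h.
  apply: (scalerI hj); rewrite h scaler_sumr -sumrN; apply: eq_bigr => i _.
  by rewrite scalerA mulrN mulrC divfK // scaleNr.
apply/seteqP; split => v [c ->].
  exists (fun i => c (lift j i) + c j * (- (a (lift j i) / a j))).
  rewrite (bigD1_ord j) //= ej scaler_sumr addrC -big_split /=.
  by apply: eq_bigr => i _; rewrite scalerDl scalerA.
exists (fun i => if unlift j i is Some k then c k else 0).
rewrite (bigD1_ord j) //= unlift_none scale0r add0r.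
by apply: eq_bigr => i _; rewrite liftK.
Qed.
End Basis.

Lemma eps_choice (R : realType) (eps : R) : 0 < eps ->
  exists s : R, [/\ 0 < s, s <= 1/2 & (1+s)*(1+s)*(1+s) <= (1+eps)*(1-s)].
Proof.
move=> e0; exists (Num.min (1/2) (eps/16)).
set s := Num.min _ _.
have h1 : s <= 1/2 by rewrite ge_min lexx.
have h2 : s <= eps/16 by rewrite ge_min lexx orbT.
have h0 : 0 < s by rewrite lt_min; apply/andP; split; [|rewrite divr_gt0]; lra.
split => //.
have : s * s <= s by nra.
have : s * s * s <= s by nra.
have : eps * s <= eps / 2 by nra.
nra.
Qed.

Lemma sum_sig (R : nmodType) (m : nat) (r : 'I_m -> nat) (F : forall k, 'I_(r k) -> R) :
  \sum_k \sum_(j < r k) F k j = \sum_(t : {k : 'I_m & 'I_(r k)}) F (tag t) (tagged t).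
Proof. by rewrite (sig_big_dep xpredT (fun _ => xpredT) F). Qed.

Section Main.
Variables (R : realType) (M : Type) (d : M -> M -> R) (m0 : M).
Hypothesis hd : is_metric d.
Variables (I : Type) (U : set (set I)).
Hypothesis hU : is_ultrafilter U.
Local Notation UP := (@ultrapower R M d m0 I U).
Local Notation ud := (@udist R M d m0 I U).
Local Notation ub := (@ubase R M d m0 I U).
Local Notation V := ((UP -> R) -> R^o).
Local Notation W := ((M -> R) -> R^o).
Local Notation NU := (dual_norm ud ub).
Local Notation NM := (dual_norm d m0).

Let hum : is_metric ud := @udist_metric R M d m0 hd I U hU.

Lemma gi_ub i : @gi R M d m0 I U i ub = m0.
Proof. by rewrite /gi asboolT. Qed.

Lemma core (m : nat) (b : 'I_m -> V) : (forall k, free_space ud ub (b k)) ->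
  indep b -> forall s : R, 0 < s -> s <= 1/2 ->
  exists Phi : 'I_m -> W, (forall k, free_space d m0 (Phi k)) /\
    forall a : 'I_m -> R,
      NM (\sum_k a k *: Phi k) <= (1 + s) * (1 + s) * NU (\sum_k a k *: b k) /\
      (1 - s) * NU (\sum_k a k *: b k) <= (1 + s) * NM (\sum_k a k *: Phi k).
Proof.
move=> hb hind s s0 s12.
have hbl k : lip0_dual ud ub (b k) by case: (hb k).
have hbb k : bnd ud ub (b k) by apply: lip0_dual_bnd.
have [K0 [K00 HK]] := basis_lower hum hbl hind.
pose del := s / K0.
have del0 : 0 < del by rewrite divr_gt0.
have H : forall k, exists z : {r : nat & (('I_r -> R) * ('I_r -> UP))%type},
    NU (b k - (fun f => \sum_(j < tag z) (tagged z).1 j * delta ud ub ((tagged z).2 j) f)) < del.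
  move=> k; have [_ /(_ del del0) [psi [[n [c [x ->]]] hpsi]]] := hb k.
  by exists (existT _ n (c, x)).
have [Z hZ] := choice H.
pose r k := tag (Z k).
pose c k : 'I_(r k) -> R := (tagged (Z k)).1.
pose x k : 'I_(r k) -> UP := (tagged (Z k)).2.
pose psi k : V := fun f => \sum_(j < r k) c k j * delta ud ub (x k j) f.
pose J := {k : 'I_m & 'I_(r k)}.
pose P (o : option J) : UP := if o is Some t then x (tag t) (tagged t) else ub.
have [i hi] := good_index hd hU P s0.
pose g : UP -> M := @gi R M d m0 I U i.
pose Phi k : W := fun f => \sum_(j < r k) c k j * delta d m0 (g (x k j)) f.
exists Phi; split.
  by move=> k; apply: span_delta_free => //; exists (r k), (c k), (fun j => g (x k j)).
move=> a.
pose ct (t : J) := a (tag t) * c (tag t) (tagged t).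
have eqU : \sum_k a k *: psi k =
    (fun f => \sum_(t : J) ct t * delta ud ub (P (Some t)) f).
  apply/funext => f; rewrite sumE.
  rewrite (eq_bigr (fun k => \sum_(j < r k) a k * c k j * delta ud ub (x k j) f)).
    by rewrite sum_sig.
  by move=> k _; rewrite /psi mulr_sumr; apply: eq_bigr => j _; rewrite mulrA.
have eqM : \sum_k a k *: Phi k =
    (fun f => \sum_(t : J) ct t * delta d m0 (g (P (Some t))) f).
  apply/funext => f; rewrite sumE.
  rewrite (eq_bigr (fun k => \sum_(j < r k) a k * c k j * delta d m0 (g (x k j)) f)).
    by rewrite sum_sig.
  by move=> k _; rewrite /Phi mulr_sumr; apply: eq_bigr => j _; rewrite mulrA.
have T1 : NM (\sum_k a k *: Phi k) <= (1 + s) * NU (\sum_k a k *: psi k).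
  rewrite eqU eqM.
  apply: (transfer hum hd (P := P) (G := g) ct (erefl _) (gi_ub i)).
    by rewrite ltr_pwDr.
  by move=> o o'; case: (hi o o').
pose G (y : M) : UP := match pselect (exists o, g (P o) = y) with
  | left h => P (projT1 (cid h)) | right _ => ub end.
have GP o : G (g (P o)) = P o.
  rewrite /G; case: pselect => [h|h]; last by exfalso; apply: h; exists o.
  case: (cid h) => o' /= ho'.
  have := (hi o' o).2; rewrite -/g ho'.
  case: hd => _ hde _ _; rewrite (proj2 (hde _ _) erefl) mulr0 => h0.
  case: hum => hu0 hue _ _; apply/(hue _ _)/eqP; rewrite eq_le h0 hu0 //.
have T2 : NU (\sum_k a k *: psi k) <= (1 + s) * NM (\sum_k a k *: Phi k).
  rewrite eqU eqM.
  have -> : (fun f => \sum_(t : J) ct t * delta ud ub (P (Some t)) f) =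
      (fun f => \sum_(t : J) ct t * delta ud ub (G (g (P (Some t)))) f).
    by apply/funext => f; apply: eq_bigr => t _; rewrite GP.
  apply: (transfer hd hum (P := fun o => g (P o)) (G := G) ct (gi_ub i)).
  - by have := GP None; rewrite /= /g gi_ub.
  - by rewrite ltr_pwDr.
  - by move=> o o'; rewrite !GP; case: (hi o o').
have bN (y : V) : bnd ud ub y -> bnd ud ub (- y).
  by move=> hy; rewrite -scaleN1r; exact: bndZ.
have bpsi k : bnd ud ub (psi k) by apply: bnd_fin.
have bdiff k : bnd ud ub (b k - psi k) by apply: bndD => //; apply: bN.
have bsb : bnd ud ub (\sum_k a k *: b k) by apply: bnd_sum.
have bsp : bnd ud ub (\sum_k a k *: psi k) by apply: bnd_sum.
have hD : NU (\sum_k a k *: b k - \sum_k a k *: psi k) <= s * NU (\sum_k a k *: b k).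
  rewrite -sumrB (eq_bigr (fun k => a k *: (b k - psi k))); last first.
    by move=> k _; rewrite scalerBr.
  apply: le_trans (N_sum hum a bdiff) _.
  apply: (@le_trans _ _ (\sum_k `|a k| * del)).
    apply: ler_sum => k _; apply: ler_wpM2l => //; apply: ltW; exact: hZ.
  rewrite -mulr_suml /del; apply: le_trans (ler_wpM2r (ltW _) (HK a)) _.
    by rewrite divr_gt0.
  by rewrite mulrC mulrA divfK ?gt_eqF //.
have hdf := N_diff hum bsb bsp.
have nU0 := N_ge0 hum bsb.
have nP0 := N_ge0 hum bsp.
move: hdf; rewrite ler_norml => /andP[hd1 hd2].
split.
  apply: le_trans T1 _; rewrite -mulrA; apply: ler_wpM2l; first lra.
  by rewrite mulrDl mul1r; lra.
apply: le_trans T2; lra.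
Qed.
Lemma N_zero : NM 0 = 0.
Proof.
apply/eqP; rewrite eq_le; apply/andP; split.
  by apply: (N_le hd) => f _; rewrite normr0.
by apply: (N_ge0 hd); exists 0 => f _; rewrite normr0.
Qed.

Lemma main_thm : fin_rep (free_space ud ub) NU (free_space d m0) NM.
Proof.
move=> E [n [e [he ->]]] eps eps0.
have [m [b [hb hE hind]]] := basis_extract he.
have [s [s0 s12 hs]] := eps_choice eps0.
have [Phi [hPhi HPhi]] := core hb hind s0 s12.
have hbl k : lip0_dual ud ub (b k) by case: (hb k).
exists (lspan Phi); split; first by exists m, Phi.
move=> c' hc'.
pose coef (v : V) : 'I_m -> R :=
  match pselect (exists a, v = \sum_k a k *: b k) with
  | left h => projT1 (cid h) | right _ => fun _ => 0 end.
have coefP a : coef (\sum_k a k *: b k) = a.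
  rewrite /coef; case: pselect => [h|h]; last by exfalso; apply: h; exists a.
  case: (cid h) => a' /= ha'; apply/funext => k.
  have : \sum_k (a' k - a k) *: b k = 0.
    by rewrite (eq_bigr (fun k => a' k *: b k - a k *: b k)) ?sumrB -?ha' ?subrr // => k' _; rewrite scalerBl.
  by move=> /hind /(_ k) /eqP; rewrite subr_eq0 => /eqP.
pose T (v : V) : W := \sum_k coef v k *: Phi k.
have TP a : T (\sum_k a k *: b k) = \sum_k a k *: Phi k by rewrite /T coefP.
rewrite hE.
have hs1 : 0 < 1 - s by lra.
exists T; split.
- move=> t v w [av ->] [aw ->].
  rewrite scaler_sumr -big_split /=.
  rewrite (eq_bigr (fun k => (t * av k + aw k) *: b k)); last first.
    by move=> k _; rewrite scalerDl scalerA.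
  rewrite !TP scaler_sumr -big_split /=; apply: eq_bigr => k _.
  by rewrite scalerDl scalerA.
- move=> v w [av ->] [aw ->]; rewrite !TP => hT.
  have h0 : \sum_k (av k - aw k) *: Phi k = 0.
    rewrite (eq_bigr (fun k => av k *: Phi k - aw k *: Phi k)); last first.
      by move=> k _; rewrite scalerBl.
    by rewrite sumrB hT subrr.
  have [_ hlow] := HPhi (fun k => av k - aw k).
  rewrite h0 N_zero mulr0 in hlow.
  have hz : NU (\sum_k (av k - aw k) *: b k) = 0.
    apply/eqP; rewrite eq_le (N_ge0 hum) ?andbT; last first.
      by apply: bnd_sum => k; apply: lip0_dual_bnd.
    by rewrite -(pmulr_rle0 _ hs1).
  have := N_def hum (lip0_dual_sum _ hbl) hz.
  rewrite (eq_bigr (fun k => av k *: b k - aw k *: b k)); last first.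
    by move=> k _; rewrite scalerBl.
  by rewrite sumrB => /eqP; rewrite subr_eq0 => /eqP.
- apply/seteqP; split => [_ [v [av ->] <-]|w [aw ->]].
    by exists av; rewrite TP.
  by exists (\sum_k aw k *: b k); [exists aw|rewrite TP].
- exists ((1 + s) * (1 + s)), ((1 + s) / (1 - s)); split.
  + by apply: mulr_ge0; lra.
  + by apply: divr_ge0; lra.
  + apply: le_trans (ltW hc'); rewrite mulrA ler_pdivrMr //.
  + by move=> v [av ->]; rewrite TP; case: (HPhi av).
  + move=> v [av ->]; rewrite TP; case: (HPhi av) => _ h.
    by rewrite mulrAC ler_pdivlMr // mulrC.
Qed.

End Main.


Theorem theorem4p1 (R : realType) (M : Type) (d : M -> M -> R) (m0 : M)
  (hd : is_metric d) (I : Type) (U : set (set I)) (hU : is_ultrafilter U) :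
  fin_rep
    (@free_space R (@ultrapower R M d m0 I U) (@udist R M d m0 I U) (@ubase R M d m0 I U))
    (@dual_norm R (@ultrapower R M d m0 I U) (@udist R M d m0 I U) (@ubase R M d m0 I U))
    (@free_space R M d m0) (@dual_norm R M d m0).
Proof. exact: main_thm. Qed.
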